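(* Let $p$ be a state of a pDFA $\mathcal{A}$ and let $q$ be a state of a pDFA $\mathcal{B}$. Then the rooted involutive graphs $\Gamma(p)$ and $\Gamma(q)$ are isomorphic as rooted involutive graphs (not considering node labels) if and only if $\mathscr{L}(p)=\mathscr{L}(q)$.
   Context: A pDFA (partial deterministic finite automaton) over a finite alphabet $A$ is a finite $A$-edge-labeled directed graph $(Q,T)$, $T\subseteq Q\times A\times Q$, such that from each state there is at most one transition with any given label. For a state $p$, $\mathscr{L}(p)\subseteq A^*$ is the set of words labeling a run (finite path) starting in $p$. The graph $\Gamma(p)$ has as nodes the runs starting in $p$ (equivalently the words in $\mathscr{L}(p)$), root the empty run, and an edge from $\varrho$ to $\varrho\tau$ labeled by the label $a$ of the transition $\tau$, together with all inverse edges from $\varrho\tau$ to $\varrho$ labeled $a^{-1}$ (using the involutive alphabet $A^{\pm1}$ if $A$ is not involutive). An isomorphism of rooted edge-labeled graphs is a bijection on nodes preserving the root and preserving and reflecting labeled edges. *)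

(* Defs.v *)
From mathcomp Require Import all_boot.
Set Implicit Arguments. Unset Strict Implicit. Unset Printing Implicit Defensive.

(* The transition
   set T ⊆ Q × A × Q, with at most one a-transition out of each state, is
   represented by the partial function [d p a = Some q] iff (p,a,q) ∈ T. *)
Definition pdfa (Q A : finType) := Q -> A -> option Q.

Section PDFA.
Variables (Q A : finType) (d : pdfa Q A).

Fixpoint run (p : Q) (w : seq A) : option Q :=
  match w with
  | [::] => Some p
  | a :: w' => match d p a with Some q => run q w' | None => None end
  end.

Definition lang (p : Q) : pred (seq A) := fun w => isSome (run p w).

(* Nodes of Γ(p): the runs from p, identified with the words of L(p). *)
Definition gnode (p : Q) := {w : seq A | lang p w}.

Definition groot (p : Q) : gnode p := exist _ [::] (erefl true).

(* Involutive alphabet A^{±1}: [inl a] is the letter a, [inr a] is a^{-1}. *)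
Definition ilabel := (A + A)%type.

Definition gedge (p : Q) (u : gnode p) (l : ilabel) (v : gnode p) : Prop :=
  match l with
  | inl a => val v = rcons (val u) a
  | inr a => val u = rcons (val v) a
  end.
End PDFA.

Definition groot_iso (A QA QB : finType) (dA : pdfa QA A) (dB : pdfa QB A)
  (p : QA) (q : QB) : Prop :=
  exists f : gnode dA p -> gnode dB q,
    [/\ bijective f, f (groot dA p) = groot dB q &
        forall (u : gnode dA p) (l : ilabel A) (v : gnode dA p),
          gedge u l v <-> gedge (f u) l (f v)].

(* Main.v *)
Require Import Defs.
From mathcomp Require Import all_boot.

Lemma run_cat (Q A : finType) (d : pdfa Q A) p w s :
  run d p (w ++ s) = obind (fun r => run d r s) (run d p w).
Proof.
elim: w p => [|a w IH] p //=.
by case: (d p a).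
Qed.

Lemma lang_rcons (Q A : finType) (d : pdfa Q A) p w a :
  lang d p (rcons w a) -> lang d p w.
Proof.
rewrite /lang -cats1 run_cat; by case: (run d p w).
Qed.

Theorem fact3p7 (A QA QB : finType) (dA : pdfa QA A) (dB : pdfa QB A)
  (p : QA) (q : QB) :
  groot_iso dA dB p q <-> (forall w : seq A, lang dA p w = lang dB q w).
Proof.
split.
- case=> f [[g fK gK] froot fe].
  have key : forall w (u : gnode dA p), val u = w -> val (f u) = w.
    elim/last_ind => [|w a IH] u uw.
      have -> : u = groot dA p by apply: val_inj.
      by rewrite froot.
    have lw : lang dA p w by move: (valP u); rewrite uw; apply: lang_rcons.
    pose u' : gnode dA p := exist _ w lw.
    have e : gedge u' (inl a) u by rewrite /= uw.
    move/fe: e => /=; rewrite (IH u') //.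
  move=> w; apply/idP/idP => H.
    by move: (valP (f (exist _ w H))); rewrite (key w).
  pose v : gnode dB q := exist _ w H.
  have := key _ (g v) (erefl _); rewrite gK /= => ->.
  exact: valP.
- move=> L.
  have hf : forall u : gnode dA p, lang dB q (val u) by move=> u; rewrite -L; exact: valP.
  have hg : forall u : gnode dB q, lang dA p (val u) by move=> u; rewrite L; exact: valP.
  exists (fun u => exist _ (val u) (hf u)); split.
  + exists (fun u => exist _ (val u) (hg u)) => u; exact: val_inj.
  + exact: val_inj.
  + by move=> u [a|a] v.
Qed.
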